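(* Let $C$ be a bounded subset of a Banach space and let $\mathcal S$ be a semigroup (under composition) of self-mappings of $C$ generated by a family of firmly nonexpansive mappings $C\to C$. Suppose $\mathcal S$ is subsurjective, i.e. there is a nonempty set $D\subset C$ with $T(D)=D$ for every $T\in\mathcal S$. Then $\mathcal S$ has a common fixed point in $C$.
   Context: A mapping $T:C\to C$ is firmly nonexpansive if $\|Tx-Ty\|\le \|\alpha(x-y)+(1-\alpha)(Tx-Ty)\|$ for all $x,y\in C$ and all $\alpha\in(0,1)$. *)

(* Defs.v *)
From HB Require Import structures.
From mathcomp Require Import all_boot all_order all_algebra.
From mathcomp Require Import all_classical all_reals all_analysis.
Set Implicit Arguments. Unset Strict Implicit. Unset Printing Implicit Defensive.
Import Order.TTheory GRing.Theory Num.Theory.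
Import numFieldNormedType.Exports.
Local Open Scope classical_set_scope.
Local Open Scope ring_scope.

Definition self_map {V : Type} (C : set V) (T : V -> V) : Prop :=
  forall x, C x -> C (T x).

Definition firmly_nonexpansive {R : realType} {V : normedModType R}
  (C : set V) (T : V -> V) : Prop :=
  forall x y, C x -> C y -> forall a : R, 0 < a < 1 ->
    `|T x - T y| <= `|a *: (x - y) + (1 - a) *: (T x - T y)|.

Inductive gen_semigroup {V : Type} (F : set (V -> V)) : (V -> V) -> Prop :=
  | gen_base T : F T -> gen_semigroup F T
  | gen_comp T1 T2 : gen_semigroup F T1 -> gen_semigroup F T2 ->
      gen_semigroup F (T1 \o T2).

Definition subsurjective {V : Type} (C : set V) (S : set (V -> V)) : Prop :=
  exists D : set V, D !=set0 /\ D `<=` C /\ forall T, S T -> T @` D = D.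

(* Main.v *)
Require Import Defs.
From HB Require Import structures.
From mathcomp Require Import all_boot all_order all_algebra.
From mathcomp Require Import all_classical all_reals all_analysis.
From mathcomp Require Import ring lra.
Import Order.TTheory GRing.Theory Num.Theory.
Import numFieldNormedType.Exports.
Local Open Scope classical_set_scope.
Local Open Scope ring_scope.

Lemma core (R : realType) (V : normedModType R) (D : set V) (T : V -> V) (M : R)
  (DM : forall x, D x -> `|x| <= M)
  (firmh : forall x y, D x -> D y ->
     2 * `|T x - T y| <= `|(x - y) + (T x - T y)|)
  (surj : T @` D = D) x : D x -> T x = x.
Proof.
have DT : forall x, D x -> D (T x) by move=> y Dy; rewrite -surj; exists y.
move=> Dx.
have [pre Hpre] : exists pre : V -> V, forall y, D y -> D (pre y) /\ T (pre y) = y.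
  have : forall y, exists z, D y -> D z /\ T z = y.
    move=> y; case: (pselect (D y)) => [Dy|nDy]; last by exists y.
    move: Dy; rewrite -{1}surj => -[z Dz Tz]; by exists z.
  by case/choice => f Hf; exists f.
pose E := [set r | exists2 y, D y & r = `|y - T y|].
have hsE : has_sup E.
  split; first by exists (`|x - T x|); exists x.
  exists (M + M) => r [y Dy ->].
  apply: le_trans (ler_normB _ _) _; apply: lerD; [exact: DM|exact: DM (DT _ Dy)].
set L := sup E.
have ub : forall y, D y -> `|y - T y| <= L.
  by move=> y Dy; apply: (sup_upper_bound hsE); exists y.
suff : L <= 0.
  move=> L0; apply/eqP; rewrite eq_sym -subr_eq0 -normr_le0.
  exact: le_trans (ub _ Dx) L0.
rewrite leNgt; apply/negP => L0.
have M0 : 0 <= M by rewrite (le_trans _ (DM _ Dx)).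
pose N := Num.bound ((M + M + 1) / L).
have HN : M + M + 1 < N%:R * L.
  rewrite -ltr_pdivrMr //; apply: archi_boundP.
  by rewrite divr_ge0 ?ltW //; lra.
pose eps : R := (2 ^+ N)^-1.
have eps0 : 0 < eps by rewrite invr_gt0 exprn_gt0.
have [r [x0 Dx0 ->] Hx0] := sup_adherent eps0 hsE.
pose xs n := iter n pre x0.
have Dxs : forall n, D (xs n).
  by elim=> [//|n IH]; rewrite /xs /= ; case: (Hpre _ IH).
have Txs : forall n, T (xs n.+1) = xs n.
  by move=> n; rewrite /xs /=; case: (Hpre _ (Dxs n)).
have mono : forall n, `|xs n - T (xs n)| <= `|xs n.+1 - T (xs n.+1)|.
  move=> n; have := firmh _ _ (Dxs n.+1) (DT _ (Dxs n.+1)).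
  rewrite !Txs => H.
  have := le_trans H (ler_normD _ _); lra.
have low : forall n, L - eps < `|xs n - T (xs n)|.
  by elim=> [//|n IH]; exact: lt_le_trans IH (mono n).
have step1 : forall n, `|xs n.+1 - xs n| <= L.
  by move=> n; rewrite -{1}(Txs n); apply: ub.
pose W k m := xs (m + k)%N - xs m.
have upper : forall k m, `|W k m| <= k%:R * L.
  elim=> [|k IH] m; first by rewrite /W addn0 subrr normr0 mul0r.
  have -> : W k.+1 m = W k m + (xs (m + k).+1 - xs (m + k)).
    by rewrite /W addnS [in RHS]addrC addrA subrK.
  rewrite (le_trans (ler_normD _ _)) // -[k.+1]addn1 natrD mulrDl mul1r lerD ?IH ?step1 //.
have rec : forall k m, 2 * `|W k.+1 m| <= `|W k.+2 m| + `|W k m.+1|.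
  move=> k m; have := firmh _ _ (Dxs (m.+1 + k.+1)%N) (Dxs m.+1).
  have Eq4 : forall a b c d : V, a - d + (b - c) = (a - c) + (b - d).
    by move=> a b c d; rewrite addrACA [RHS]addrACA (addrC (- d)).
  rewrite /W !addSn !addnS !Txs Eq4 => H.
  exact: le_trans H (ler_normD _ _).
have lower : forall k m, k.+1%:R * L - 2 ^+ k.+1 * eps <= `|W k.+1 m|.
  elim=> [|k IH] m.
    rewrite /W addn1 expr1 mul1r -{1}(Txs m).
    have := low m.+1; lra.
  have := rec k m; have := IH m; have := upper k m.+1.
  have e1 : (k.+2)%:R = k%:R + 2 :> R by rewrite -addn2 natrD.
  have e2 : (k.+1)%:R = k%:R + 1 :> R by rewrite -addn1 natrD.
  rewrite e1 e2 [2 ^+ k.+2]exprS !mulrDl -mulrA.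
  set P := 2 ^+ k.+1 * eps; set K := k%:R * L; lra.
have N0 : (0 < N)%N.
  rewrite lt0n; apply/eqP => N0; move: HN; rewrite N0 mul0r; lra.
have := lower N.-1 0%N; rewrite prednK // /eps mulfV ?expf_neq0 //.
have : `|W N 0%N| <= M + M.
  rewrite /W; apply: le_trans (ler_normB _ _) _; apply: lerD; exact: DM.
move: HN; lra.
Qed.

Lemma bnd (R : realType) (V : normedModType R) (C : set V) :
  bounded_set C -> exists M : R, forall x, C x -> `|x| <= M.
Proof.
move=> Cb. case: Cb => M0 [M0r HM].
exists (`|M0| + 1) => x Cx.
have := HM (`|M0| + 1). apply => //.
rewrite (le_lt_trans (real_ler_norm M0r)) //. by rewrite ltrDl.
Qed.

Theorem corollary3p11 (R : realType) (V : completeNormedModType R)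
  (C : set V) (F : set (V -> V)) :
  bounded_set C ->
  (forall T, F T -> self_map C T /\ firmly_nonexpansive C T) ->
  subsurjective C (gen_semigroup F) ->
  exists x, C x /\ forall T, gen_semigroup F T -> T x = x.
Proof.
move=> /bnd [M HM] HF [D [[d Dd] [DC HD]]].
have fixD : forall T, gen_semigroup F T -> forall x, D x -> T x = x.
  move=> T; elim => [T0 FT0|T1 T2 _ IH1 _ IH2] x Dx; last first.
    by rewrite /= IH2 // IH1.
  have [_ Hfirm] := HF _ FT0.
  apply: (@core _ _ D T0 M) => //.
  - by move=> y Dy; apply: HM; apply: DC.
  - move=> y z Dy Dz.
    have h2 : 0 < (2^-1 : R) < 1 by apply/andP; split; [rewrite invr_gt0 | rewrite invf_lt1]; lra.
    have := Hfirm y z (DC _ Dy) (DC _ Dz) _ h2.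
    have -> : 1 - 2^-1 = 2^-1 :> R by field.
    rewrite -scalerDr normrZ gtr0_norm ?invr_gt0 //; last lra.
  - by apply: HD; apply: gen_base.
by exists d; split; [exact: DC | move=> T /fixD; apply].
Qed.
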